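(* Let $(X,d)$ be a bounded metric space and let $M: X\to\mathbb{R}$ satisfy $d(x,y)\le M(x)\le d(x,z)+M(z)$ for all $x,y,z\in X$. Let $d_S$ be the subset distance on $\mathcal{F}(X)$ defined in the context. Suppose $X_1,X_2\in\mathcal{F}(X)$ with $|X_1|\le|X_2|$. Then for any $b\in X$, $d_S(X_1,X_2)\le d_S(X_1,X_2\cup\{b\})$.
   Context: $\mathcal{F}(X)$ denotes the set of all finite subsets of $X$. For $A,B\in\mathcal{F}(X)$ with $|A|\le|B|$ and an injection $\chi:A\to B$, define $d_\chi(A,B)=\sum_{x\in A} d(x,\chi(x))+\sum_{y\in B\setminus\chi(A)} M(y)$. The subset distance is $d_S(A,B)=d_S(B,A)=\min\{d_\chi(A,B) : \chi:A\to B \text{ an injection}\}$ (for $|A|\le|B|$). *)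

(* Defs.v *)
From HB Require Import structures.
From mathcomp Require Import all_boot all_order all_algebra.
From mathcomp Require Import finmap.
From mathcomp Require Import reals.
Set Implicit Arguments. Unset Strict Implicit. Unset Printing Implicit Defensive.
Import Order.TTheory GRing.Theory Num.Theory.
Local Open Scope ring_scope.


Section SubsetDistance.
Variables (R : realType) (T : choiceType).

Definition is_metric (d : T -> T -> R) : Prop :=
  (forall x y, 0 <= d x y) /\
  (forall x y, d x y = 0 <-> x = y) /\
  (forall x y, d x y = d y x) /\
  (forall x y z, d x z <= d x y + d y z).

Definition metric_bounded (d : T -> T -> R) : Prop :=
  exists C : R, forall x y, d x y <= C.

Definition M_admissible (d : T -> T -> R) (M : T -> R) : Prop :=
  forall x y z, d x y <= M x /\ M x <= d x z + M z.

Variables (d : T -> T -> R) (M : T -> R).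

Definition dchi (A B : {fset T}) (chi : {ffun A -> B}) : R :=
  \sum_(x : A) d (val x) (val (chi x)) +
  \sum_(y : B | y \notin codom chi) M (val y).

Definition injections (A B : {fset T}) : seq {ffun A -> B} :=
  filter (fun chi : {ffun A -> B} => injectiveb chi) (enum {ffun A -> B}).

(* minimum of d_chi over injections (for |A| <= |B| the list is nonempty,
   so the default head value is itself attained) *)
Definition dS_ord (A B : {fset T}) : R :=
  let s := map (@dchi A B) (injections A B) in
  \big[Num.min/head 0 s]_(r <- s) r.

Definition dS (A B : {fset T}) : R :=
  if (#|` A|%fset <= #|` B|%fset)%N then dS_ord A B else dS_ord B A.

End SubsetDistance.

(* Main.v *)
Require Import Defs.
From HB Require Import structures.
From mathcomp Require Import all_boot all_order all_algebra.
From mathcomp Require Import finmap.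
From mathcomp Require Import reals.
From mathcomp Require Import zify lra.
Import Order.TTheory GRing.Theory Num.Theory.
Local Open Scope ring_scope.
Set Implicit Arguments. Unset Strict Implicit.

Section Aux.
Variable R : realType.

Lemma bigmin_le (s : seq R) x0 r : r \in s -> \big[Num.min/x0]_(i <- s) i <= r.
Proof.
elim: s => // a s IH; rewrite inE big_cons => /orP[/eqP->|/IH H].
  by rewrite ge_min lexx.
by rewrite ge_min H orbT.
Qed.

Lemma le_bigmin' (m : R) s x0 : m <= x0 -> (forall r, r \in s -> m <= r) ->
  m <= \big[Num.min/x0]_(i <- s) i.
Proof.
move=> h0; elim: s => [|a s IH] H; first by rewrite big_nil.
rewrite big_cons le_min H ?mem_head //= IH // => r rs; apply: H; by rewrite inE rs orbT.
Qed.

Variable T : choiceType.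

Lemma inj_exists (A B : {fset T}) : (#|` A| <= #|` B|)%N ->
  exists chi : {ffun A -> B}, injectiveb chi.
Proof.
move=> h; have h' : (#|{: A}| <= #|{: B}|)%N by rewrite -!cardfE.
exists [ffun x => enum_val (widen_ord h' (enum_rank x))].
apply/injectiveP => x y; rewrite !ffunE => /enum_val_inj /(congr1 val) /= E.
by apply: enum_rank_inj; apply: val_inj.
Qed.

Variables (d : T -> T -> R) (M : T -> R).

Lemma Msum (A B : {fset T}) (chi : {ffun A -> B}) :
 \sum_(y : B | y \notin codom chi) M (val y) =
 \sum_(y <- B | y \notin map val (codom chi)) M y.
Proof. by rewrite big_seq_fsetE /=; apply: eq_bigl => y; rewrite (mem_map val_inj). Qed.

Lemma dS_ord_le (A B : {fset T}) (chi : {ffun A -> B}) : injectiveb chi ->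
  dS_ord d M A B <= dchi d M chi.
Proof.
move=> ichi; rewrite /dS_ord; apply: bigmin_le; apply: map_f.
by rewrite mem_filter ichi mem_enum.
Qed.

Lemma dS_ord_ge (A B : {fset T}) (m : R) : (#|` A| <= #|` B|)%N ->
  (forall chi : {ffun A -> B}, injectiveb chi -> m <= dchi d M chi) ->
  m <= dS_ord d M A B.
Proof.
move=> hAB H; rewrite /dS_ord.
have Hs : forall r, r \in map (dchi d M (B:=B)) (injections A B) -> m <= r.
  move=> r /mapP [chi]; rewrite mem_filter => /andP[ichi _] ->; exact: H.
apply: le_bigmin' => //.
have [chi ichi] := inj_exists hAB.
case E: (map _ _) => [|a s] /=.
  have : dchi d M chi \in map (dchi d M (B:=B)) (injections A B).
    by apply: map_f; rewrite mem_filter ichi mem_enum.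
  by rewrite E.
by apply: Hs; rewrite E mem_head.
Qed.

End Aux.

Section Key.
Variables (R : realType) (T : choiceType) (d : T -> T -> R) (M : T -> R).
Hypotheses (hd : is_metric d) (hM : M_admissible d M).
Variables (X1 X2 : {fset T}) (b : T).
Hypotheses (hb : b \notin X2) (h12 : (#|` X1| <= #|` X2|)%N).

Lemma key (chi : {ffun X1 -> (b |` X2)%fset}) : injectiveb chi ->
  exists2 psi : {ffun X1 -> X2}, injectiveb psi & dchi d M psi <= dchi d M chi.
Proof.
move=> /injectiveP ichi.
set S := map val (codom chi).
have inS : forall x, val (chi x) \in S by move=> x; apply: map_f; apply: codom_f.
have Mb0 : forall y, 0 <= M y.
  move=> y; have [h _] := hM y y y; apply: le_trans h; by case: hd.
case: (boolP (b \in S)) => hbS; last first.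
  have H : forall x, val (chi x) \in X2.
    move=> x; have := valP (chi x); rewrite in_fsetU in_fset1 => /orP[/eqP E|//].
    by move: (inS x) hbS; rewrite E => ->.
  exists [ffun x => FSetSub (H x)].
    apply/injectiveP => x y; rewrite !ffunE => /(congr1 val) /= E.
    by apply: ichi; apply: val_inj.
  rewrite /dchi !Msum.
  have -> : map val (codom [ffun x => FSetSub (H x)]) = S.
    by rewrite /S !codomE -!map_comp; apply: eq_map => x /=; rewrite ffunE.
  rewrite [X in _ <= _ + X]big_mkcond (@big_fsetU1 R 0 +%R T b X2) // -big_mkcond /= hbS.
  rewrite (eq_bigr (fun x => d (val x) (val (chi x)))); last by move=> x _; rewrite ffunE.
  rewrite -/S lerD2l; exact: ler_wpDl.
have [y1 /codomP [a ->] Ea] := mapP hbS.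
have [y0 y0X2 y0S] : exists2 y0, y0 \in X2 & y0 \notin S.
  case: (@hasP _ (fun y => y \notin S) X2) => [[z ? ?]|hn]; first by exists z.
  exfalso.
  have sub : {subset (b |` X2)%fset <= S}.
    move=> y; rewrite in_fsetU in_fset1 => /orP[/eqP->//|yX].
    by apply/negPn/negP => yS; apply: hn; exists y.
  have := uniq_leq_size (fset_uniq (b |` X2)%fset) sub.
  rewrite size_map size_codom -cardfE.
  change ((#|` (b |` X2)%fset| <= #|` X1|)%N -> False).
  rewrite cardfsU1 hb /=; lia.
pose y0' : X2 := FSetSub y0X2.
pose psi : {ffun X1 -> X2} := [ffun x => insubd y0' (val (chi x))].
have vpsi : forall x, val (psi x) = if x == a then y0 else val (chi x).
  move=> x; rewrite ffunE val_insubd /=; case: eqP => [->|nxa].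
    by rewrite -Ea (negbTE hb).
  have -> // : val (chi x) \in X2.
  have := valP (chi x); rewrite in_fsetU in_fset1 => /orP[/eqP E|//].
  by exfalso; apply: nxa; apply: ichi; apply: val_inj; rewrite E -Ea.
exists psi.
  apply/injectiveP => x x' /(congr1 val); rewrite !vpsi.
  case: eqP => [->|nxa]; case: eqP => [->|nx'a] //.
  - by move=> E; move: y0S; rewrite E inS.
  - by move=> E; move: y0S; rewrite -E inS.
  - by move/val_inj; apply: ichi.
have Sp : forall y, y \in X2 ->
    (y \in map val (codom psi)) = (y == y0) || (y \in S).
  move=> y yX2; apply/idP/idP.
    move=> /mapP [z /codomP [x ->] ->]; rewrite vpsi.
    by case: (x == a); [rewrite eqxx | rewrite inS orbT].
  case/orP => [/eqP -> | /mapP [z /codomP [x ->] E]].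
    by apply/mapP; exists (psi a); [exact: codom_f | rewrite vpsi eqxx].
  apply/mapP; exists (psi x); first exact: codom_f.
  rewrite vpsi E; case: eqP => // exa.
  by move: yX2 hb; rewrite E exa -Ea => ->.
rewrite /dchi !Msum -/S.
rewrite [X in _ <= _ + X]big_mkcond (@big_fsetU1 R 0 +%R T b X2) // /= hbS /= add0r.
rewrite (bigD1 a) //= [X in _ <= X + _](bigD1 a) //= vpsi eqxx -Ea.
rewrite (eq_bigr (fun x => d (val x) (val (chi x)))); last first.
  by move=> x nxa; rewrite vpsi (negbTE nxa).
rewrite [X in _ <= _ + X]big_mkcond (bigD1_seq y0) ?fset_uniq //= y0S.
rewrite [X in _ <= _ + (_ + X)]big_mkcond [X in _ + X <= _]big_mkcond.
rewrite [X in _ + X <= _](eq_big_seq (fun i => if i != y0 then (if i \notin S then M i else 0) else 0)); last first.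
  by move=> i iX2; rewrite Sp // negb_or; case: (i == y0); case: (i \in S).
have [_ [_ [dsym dtri]]] := hd.
have h1 := dtri (val a) b y0; have h2 := dsym b y0; have [h3 _] := hM y0 b b.
lra.
Qed.
End Key.

Theorem lemma2p3 (R : realType) (T : choiceType) (d : T -> T -> R) (M : T -> R)
  (hd : is_metric d) (hbd : metric_bounded d) (hM : M_admissible d M)
  (X1 X2 : {fset T}) (h12 : (#|` X1|%fset <= #|` X2|%fset)%N) (b : T) :
  dS d M X1 X2 <= dS d M X1 (X2 `|` [fset b])%fset.
Proof.
case: (boolP (b \in X2)) => hb.
  have -> : (X2 `|` [fset b])%fset = X2 by apply/fsetUidPl; rewrite fsub1set.
  exact: le_refl.
rewrite (fsetUC X2 [fset b]%fset).
have hY : (#|` X1| <= #|` (b |` X2)%fset|)%N by rewrite cardfsU1 hb /=; lia.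
rewrite /dS h12 hY.
apply: dS_ord_ge => // chi ichi.
have [psi ipsi le] := key hd hM hb h12 ichi.
exact: le_trans (dS_ord_le _ _ ipsi) le.
Qed.
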